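(* Let $F$ be a finite field with $q=|F|$. Let $r,m,n\in\mathbb{N}$ satisfy $r\le m$ and $r\le n$. Then the number of $(m+n+1)$-tuples $x\in F^{m+n+1}$ satisfying $\operatorname{rank}(H_{m,n}(x))\le r$ is $q^{2r}$.
   Context: $\mathbb{N}=\{0,1,2,\ldots\}$. For $N\in\mathbb{N}$, $x=(x_0,\ldots,x_N)\in F^{N+1}$ and integers $p,p'\ge -1$ with $p+p'\le N$, the Hankel matrix $H_{p,p'}(x)$ is the $(p+1)\times(p'+1)$ matrix $(x_{i+j})_{0\le i\le p,\,0\le j\le p'}$. *)

(* Defs.v *)
From mathcomp Require Import all_boot all_order all_algebra.
Set Implicit Arguments. Unset Strict Implicit. Unset Printing Implicit Defensive.
Import GRing.Theory.
Local Open Scope ring_scope.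

Definition hankel (T : Type) (p p' : nat) (x : 'I_(p + p').+1 -> T)
  : 'M[T]_(p.+1, p'.+1) :=
  \matrix_(i < p.+1, j < p'.+1) x (inord (i + j)).

(* Main.v *)
Require Import Defs.
From mathcomp Require Import all_boot all_order all_algebra zify.
Set Implicit Arguments. Unset Strict Implicit. Unset Printing Implicit Defensive.
Import GRing.Theory.
Local Open Scope ring_scope.

Definition hk (F : fieldType) (X : nat -> F) p p' : 'M[F]_(p.+1, p'.+1) :=
  \matrix_(i < p.+1, j < p'.+1) X (i + j)%N.
Definition rw (F : fieldType) (X : nat -> F) m i : 'rV[F]_(m.+1) :=
  \row_(j < m.+1) X (i + j)%N.
Definition W (F : fieldType) (X : nat -> F) m k : 'M[F]_(m.+1) :=
  (\sum_(i < k) <<rw X m i>>)%MS.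

Lemma hk_tr (F : fieldType) (X : nat -> F) p p' : (hk X p p')^T = hk X p' p.
Proof. by apply/matrixP => i j; rewrite !mxE addnC. Qed.

Lemma row_hk (F : fieldType) (X : nat -> F) p p' (i : 'I_p.+1) :
  row i (hk X p p') = rw X p' i.
Proof. by apply/rowP => j; rewrite !mxE. Qed.

Lemma rw_W (F : fieldType) (X : nat -> F) m k i : (i < k)%N -> (rw X m i <= W X m k)%MS.
Proof.
move=> ik; rewrite /W (sumsmx_sup (Ordinal ik)) //; by rewrite genmxE.
Qed.

Lemma W_sub (F : fieldType) (X : nat -> F) m k p (A : 'M_(p, m.+1)) :
  (forall i, (i < k)%N -> (rw X m i <= A)%MS) -> (W X m k <= A)%MS.
Proof.
move=> H; apply/sumsmx_subP => i _; rewrite genmxE; exact: H.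
Qed.

Lemma Wmono (F : fieldType) (X : nat -> F) m k1 k2 : (k1 <= k2)%N -> (W X m k1 <= W X m k2)%MS.
Proof. move=> le; apply: W_sub => i ik; apply: rw_W; exact: leq_trans ik le. Qed.

Lemma hk_W (F : fieldType) (X : nat -> F) p m : (hk X p m :=: W X m p.+1)%MS.
Proof.
apply/eqmxP/andP; split.
  apply/row_subP => i; rewrite row_hk; exact: rw_W.
apply: W_sub => i ip.
have -> : rw X m i = row (Ordinal ip) (hk X p m) by rewrite row_hk.
exact: row_sub.
Qed.

Lemma rank_hk_W (F : fieldType) (X : nat -> F) p m : \rank (hk X p m) = \rank (W X m p.+1).
Proof. by rewrite (hk_W X p m). Qed.

Lemma rank_W_le (F : fieldType) (X : nat -> F) m k : (\rank (W X m k) <= k)%N.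
Proof.
elim: k => [|k IH]; first by rewrite /W big_ord0 mxrank0.
rewrite /W big_ord_recr /=.
apply: leq_trans (mxrank_adds_leqif _ _).1 _.
by rewrite mxrank_gen -(addn1 k) leq_add // rank_leq_row.
Qed.

Lemma pigeon (f : nat -> nat) n : f 0%N = 0%N -> (forall k, f k <= f k.+1)%N ->
  (f n.+1 <= n)%N -> exists2 k, (k <= n)%N & f k.+1 = f k.
Proof.
move=> f0 mono hn.
have [/existsP [k /eqP hk]|] := boolP [exists k : 'I_n.+1, f k.+1 == f k].
  by exists k => //; rewrite -ltnS.
rewrite negb_exists => /forallP hall.
have: forall k, (k <= n.+1)%N -> (k <= f k)%N.
  elim => [|k IH] hk; first by [].
  have := hall (Ordinal hk); rewrite /= => hne.
  have := mono k; rewrite leq_eqVlt eq_sym (negbTE hne) /= => lt.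
  by apply: leq_ltn_trans lt; apply: IH; apply: ltnW.
by move=> /(_ n.+1 (leqnn _)); rewrite leqNgt ltnS hn.
Qed.

Lemma SLup (F : fieldType) (X : nat -> F) m n r : (r <= m)%N -> (r <= n)%N ->
  (\rank (hk X n m.+1) <= r)%N -> (\rank (hk X n.+1 m) <= r)%N.
Proof.
move=> rm rn hA.
rewrite rank_hk_W.
have hBA : (\rank (hk X n m) <= \rank (hk X n m.+1))%N.
  rewrite -mxrank_tr hk_tr -[X in (_ <= X)%N]mxrank_tr hk_tr !rank_hk_W.
  by apply: mxrankS; apply: Wmono.
have hB : (\rank (W X m n.+1) <= r)%N by rewrite -rank_hk_W; exact: leq_trans hA.
case: (ltnP (\rank (W X m n.+1)) r) => [lt|ge].
  rewrite /W big_ord_recr /=.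
  apply: leq_trans (mxrank_adds_leqif _ _).1 _.
  rewrite mxrank_gen; apply: leq_trans lt; rewrite -(addn1 (\rank _)) leq_add2l.
  exact: rank_leq_row.
have eqr : \rank (W X m n.+1) = r by apply/eqP; rewrite eqn_leq hB ge.
have sub1 : (hk X m n <= hk X m.+1 n)%MS.
  by rewrite (hk_W X m n) (hk_W X m.+1 n) Wmono.
have req : \rank (hk X m.+1 n) = \rank (hk X m n).
  rewrite -mxrank_tr hk_tr -[in RHS]mxrank_tr hk_tr.
  have e1 : \rank (hk X n m) = r by rewrite rank_hk_W.
  by apply/eqP; rewrite e1 eqn_leq hA /= -e1.
have sub2 : (hk X m.+1 n <= hk X m n)%MS.
  by rewrite -(mxrank_leqif_sup sub1).2 req.
have /submxP [a ha] : (row ord_max (hk X m.+1 n) <= hk X m n)%MS.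
  exact: submx_trans (row_sub _ _) sub2.
have rec : forall j, (j <= n)%N -> X (m.+1 + j)%N = \sum_(i < m.+1) a 0 i * X (i + j)%N.
  move=> j jn; have := congr1 (fun M : 'rV[F]_n.+1 => M 0 (Ordinal (jn : (j < n.+1)%N))) ha.
  by rewrite !mxE /= => ->; apply: eq_bigr => i _; rewrite mxE.
pose M : 'M[F]_(m.+1) := \matrix_(k, l) if (l < m)%N then ((k : nat) == l.+1)%:R else a 0 k.
have step : forall i, (i <= n)%N -> rw X m i *m M = rw X m i.+1.
  move=> i iin; apply/rowP => l; rewrite !mxE.
  case: (ltnP l m) => lm.
    have lm' : (l.+1 < m.+1)%N by [].
    rewrite (bigD1 (Ordinal lm')) //= big1 => [|k nk]; rewrite /M !mxE lm /=.
      by rewrite eqxx mulr1 addr0 addnS addSn.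
    case: eqP => [ek|_]; last by rewrite mulr0.
    by case/eqP: nk; apply: val_inj.
  have hl : (l : nat) = m by apply/eqP; rewrite eqn_leq lm -ltnS ltn_ord.
  rewrite hl addSn -addnC rec //; apply: eq_bigr => k _.
  by rewrite /M !mxE ltnNge lm /= mulrC addnC.
have [k kn hk] : exists2 k, (k <= n)%N & \rank (W X m k.+1) = \rank (W X m k).
  apply: (@pigeon (fun k => \rank (W X m k)) n).
  - by rewrite /W big_ord0 mxrank0.
  - move=> k; exact: mxrankS (Wmono X m (leqnSn k)).
  - by rewrite eqr.
have sWk : (W X m k.+1 <= W X m k)%MS.
  by rewrite -(mxrank_leqif_sup (Wmono X m (leqnSn k))).2 hk.
have rwk : (rw X m k <= W X m k)%MS.
  exact: submx_trans (rw_W _ _ (ltnSn k)) sWk.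
have WM : (W X m k *m M <= W X m k)%MS.
  rewrite /W sumsmxMr; apply/sumsmx_subP => i _.
  rewrite (eqmxMr _ (genmxE _)) step; last by apply: leq_trans (ltnW (ltn_ord i)) kn.
  case: (ltnP i.+1 k) => ik; first exact: rw_W.
  have -> : i.+1 = k by apply/eqP; rewrite eqn_leq ik ltn_ord.
  exact: rwk.
have inv : forall t, (k + t <= n.+1)%N -> (rw X m (k + t) <= W X m k)%MS.
  elim => [|t IH] ht.
    by rewrite addn0.
  rewrite addnS -step; last by rewrite -ltnS -addnS.
  apply: submx_trans WM; apply: submxMr; apply: IH; apply: leq_trans ht; by rewrite leq_add2l.
apply: (@leq_trans (\rank (W X m k)) _ r).
  apply: mxrankS; apply: W_sub => i ii.
  case: (ltnP i k) => ik; first exact: rw_W.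
  by rewrite -(subnKC ik); apply: inv; rewrite subnKC.
rewrite -eqr; apply: mxrankS; apply: Wmono; exact: ltnW.
Qed.


Lemma card_sub (F : finFieldType) m n (A : 'M[F]_(m, n)) :
  #|[set u : 'rV[F]_n | (u <= A)%MS]| = (#|F| ^ \rank A)%N.
Proof.
rewrite -[\rank A]mul1n -card_mx.
have injA: injective (mulmxr (row_base A)).
  have /row_freeP[A' A'K] := row_base_free A.
  by move=> ?; apply: can_inj (mulmxr A') _ => u; rewrite /= -mulmxA A'K mulmx1.
rewrite -(card_image (injA 1%N)); apply: eq_card => v.
by rewrite inE -(eq_row_base A) (sameP submxP codomP).
Qed.

Lemma card_ker (F : finFieldType) m n (A : 'M[F]_(m, n)) :
  #|[set u : 'rV[F]_m | u *m A == 0]| = (#|F| ^ (m - \rank A))%N.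
Proof.
rewrite -mxrank_ker -card_sub; apply: eq_card => u; by rewrite !inE sub_kermx.
Qed.

Definition Tm (F : fieldType) N s (u : 'rV[F]_s.+1) : 'M[F]_(N.+1, (N - s).+1) :=
  \matrix_(k, j) \sum_(i < s.+1) (if (k : nat) == (i + j)%N then u 0 i else 0).

Lemma Tm_inj (F : fieldType) N s (u : 'rV[F]_s.+1) (w : 'rV[F]_(N - s).+1) :
  (s <= N)%N -> u != 0 -> w *m (Tm N u)^T = 0 -> w = 0.
Proof.
move=> sN unz hw.
pose pu := \poly_(i < s.+1) u 0 (inord i).
pose pw := \poly_(j < (N - s).+1) w 0 (inord j).
have pu0 : pu != 0.
  apply/eqP => pu0; apply: (negP unz); apply/eqP/rowP => i.
  have := congr1 (fun p : {poly F} => p`_i) pu0.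
  by rewrite coef_poly ltn_ord inord_val coef0 mxE => ->.
have pp : pu * pw = 0.
  apply/polyP => k; rewrite coef0.
  case: (leqP k N) => kN; last first.
    apply: nth_default; apply: leq_trans (size_mul_leq _ _) _.
    apply: (leq_trans _ kN); rewrite -subn1 leq_subLR add1n.
    apply: leq_trans (leq_add (size_poly _ _) (size_poly _ _)) _.
    by rewrite addSn ltnS addnS subnKC.
  have := congr1 (fun M : 'rV[F]_N.+1 => M 0 (inord k)) hw.
  rewrite !mxE => H; apply: (eq_trans _ H).
  under [RHS]eq_bigr do rewrite !mxE mulr_sumr.
  rewrite exchange_big /=.
  have inner : forall i : 'I_s.+1,
     \sum_(j < (N - s).+1) w 0 j * (if (@inord N k : nat) == (i + j)%N then u 0 i else 0)
     = pu`_i * (if (i <= k)%N then pw`_(k - i) else 0).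
    move=> i; rewrite inordK // coef_poly ltn_ord inord_val.
    case: (leqP i k) => ik; last first.
      rewrite mulr0; apply: big1 => j _.
      case: eqP => [e|_]; last by rewrite mulr0.
      by move: ik; rewrite e ltnNge leq_addr.
    rewrite coef_poly; case: (ltnP (k - i) (N - s).+1) => kil.
      rewrite (bigD1 (Ordinal kil)) //= big1 => [|j nj].
        have -> : inord (k - i) = Ordinal kil :> 'I_(N - s).+1 by apply: val_inj; rewrite /= inordK.
        by rewrite subnKC // eqxx addr0 mulrC.
      case: eqP => [e|_]; last by rewrite mulr0.
      by case/eqP: nj; apply: val_inj => /=; rewrite e addKn.
    rewrite mulr0; apply: big1 => j _.
    case: eqP => [e|_]; last by rewrite mulr0.
    by move: kil; rewrite e addKn leqNgt ltn_ord.
  rewrite (eq_bigr _ (fun i _ => inner i)) coefM.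
  rewrite (big_ord_widen N.+1 (fun i => pu`_i * (if (i <= k)%N then pw`_(k - i) else 0))) //.
  rewrite (big_ord_widen N.+1 (fun j => pu`_j * pw`_(k - j))) //.
  rewrite big_mkcond [RHS]big_mkcond; apply: eq_bigr => i _.
  rewrite /pu coef_poly.
  case: (ltnP i s.+1) => si; case: (ltnP i k.+1) => ik //=.
  - by rewrite -ltnS ik.
  - by rewrite leqNgt ik /= mulr0.
  - by rewrite mul0r.
have : pw = 0.
  by move: pp => /eqP; rewrite mulf_eq0 (negbTE pu0) /= => /eqP.
move=> pw0; apply/rowP => j; have := congr1 (fun p : {poly F} => p`_j) pw0.
by rewrite coef_poly ltn_ord inord_val coef0 !mxE.
Qed.

Lemma rank_Tm (F : fieldType) N s (u : 'rV[F]_s.+1) :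
  (s <= N)%N -> u != 0 -> \rank (Tm N u) = (N - s).+1.
Proof.
move=> sN unz; rewrite -mxrank_tr; apply/eqP; rewrite -/(row_free _) -kermx_eq0.
apply/eqP/row_matrixP => i; rewrite row0; apply: (Tm_inj sN unz).
by apply/eqP; rewrite -sub_kermx row_sub.
Qed.

Definition Xv (F : fieldType) N (v : 'rV[F]_N.+1) k := v 0 (inord k).
Definition Hs (F : fieldType) N s (v : 'rV[F]_N.+1) := hk (Xv v) s (N - s).

Lemma HsT (F : fieldType) N s (u : 'rV[F]_s.+1) (v : 'rV[F]_N.+1) :
  (s <= N)%N -> u *m Hs s v = v *m Tm N u.
Proof.
move=> sN; apply/rowP => j; rewrite !mxE.
under [RHS]eq_bigr do rewrite !mxE mulr_sumr.
rewrite exchange_big /=; apply: eq_bigr => i _.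
rewrite !mxE /Xv.
have ijN : (i + j < N.+1)%N.
  rewrite ltnS; apply: leq_trans (leq_add (_ : (i <= s)%N) (_ : (j <= N - s)%N)) _.
  - by rewrite -ltnS.
  - by rewrite -ltnS.
  by rewrite subnKC.
rewrite (bigD1 (Ordinal ijN)) //= big1 => [|k nk].
  rewrite eqxx addr0 mulrC; congr (_ * _); congr (v 0 _); apply: val_inj; by rewrite /= inordK.
case: eqP => [e|_]; last by rewrite mulr0.
by case/eqP: nk; apply: val_inj.
Qed.

Lemma card_solv (F : finFieldType) N s (u : 'rV[F]_s.+1) :
  (s <= N)%N -> u != 0 -> #|[set v : 'rV[F]_N.+1 | u *m Hs s v == 0]| = (#|F| ^ s)%N.
Proof.
move=> sN unz.
have -> : [set v : 'rV[F]_N.+1 | u *m Hs s v == 0] = [set v | v *m Tm N u == 0].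
  by apply/setP => v; rewrite !inE HsT.
by rewrite card_ker rank_Tm // subSS subKn.
Qed.


Lemma SLdown (F : fieldType) (X : nat -> F) m n r : (r <= m)%N -> (r <= n)%N ->
  (\rank (hk X m.+1 n) <= r)%N -> (\rank (hk X m n.+1) <= r)%N.
Proof.
move=> rm rn h; rewrite -mxrank_tr hk_tr; apply: SLup => //.
by rewrite -mxrank_tr hk_tr.
Qed.

Definition rk (F : fieldType) N s (v : 'rV[F]_N.+1) := \rank (Hs s v).

Lemma rk_le (F : fieldType) N s (v : 'rV[F]_N.+1) : (rk s v <= s.+1)%N.
Proof. exact: rank_leq_row. Qed.

Lemma fact_a (F : fieldType) N s (v : 'rV[F]_N.+1) : (2 * s + 2 <= N)%N ->
  (rk s v <= s)%N -> rk s.+1 v = rk s v.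
Proof.
move=> hN; rewrite /rk /Hs.
have e : (N - s = (N - s.+1).+1)%N by lia.
rewrite e => hs.
have h1 : (\rank (hk (Xv v) s.+1 (N - s.+1)) <= \rank (hk (Xv v) s (N - s.+1).+1))%N.
  apply: SLup => //; lia.
apply/eqP; rewrite eqn_leq h1 /=.
apply: SLdown => //; lia.
Qed.

Lemma fact_b (F : fieldType) N s (v : 'rV[F]_N.+1) : (2 * s + 2 <= N)%N ->
  (rk s.+1 v <= s)%N -> (rk s v <= s)%N.
Proof.
move=> hN hs; rewrite /rk /Hs.
have e : (N - s = (N - s.+1).+1)%N by lia.
rewrite e; apply: SLdown => //; lia.
Qed.

Definition Kc (F : finFieldType) N s (v : 'rV[F]_N.+1) :=
  #|[set u : 'rV[F]_s.+1 | u *m Hs s v == 0]|.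

Lemma Kc_val (F : finFieldType) N s (v : 'rV[F]_N.+1) : Kc s v = (#|F| ^ (s.+1 - rk s v))%N.
Proof. exact: card_ker. Qed.

Lemma q_gt1 (F : finFieldType) : (1 < #|F|)%N.
Proof.
rewrite (cardD1 0) (cardD1 1) !inE oner_eq0 /=.
by rewrite add1n ltnS add1n.
Qed.

Lemma ident0 (F : finFieldType) N (v : 'rV[F]_N.+1) :
  Kc 0 v = (1 + (#|F| - 1) * (rk 0 v <= 0))%N.
Proof.
rewrite Kc_val; have := rk_le 0 v; have := q_gt1 F.
case: (rk 0 v) => [|[|k]] //= q1 hr.
  by rewrite subn0 expn1; lia.
by rewrite subnn expn0 muln0.
Qed.

Lemma identS (F : finFieldType) N s (v : 'rV[F]_N.+1) : (2 * s + 2 <= N)%N ->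
  (Kc s.+1 v + #|F| = #|F| * Kc s v + 1 + (#|F| - 1) * (rk s.+1 v <= s.+1))%N.
Proof.
move=> hN; rewrite !Kc_val; have q1 := q_gt1 F.
case: (leqP (rk s v) s) => hs.
  rewrite fact_a // (leq_trans hs) //= subSn; last by apply: leq_trans hs _.
  by rewrite expnS muln1 -addnA subnKC // ltnW.
have ers : rk s v = s.+1 by apply/eqP; rewrite eqn_leq rk_le hs.
rewrite ers subnn expn0 muln1.
have hb : (s.+1 <= rk s.+1 v)%N.
  by rewrite ltnNge; apply/negP => /(fact_b hN); rewrite leqNgt hs.
have := rk_le s.+1 v.
case: (leqP (rk s.+1 v) s.+1) => h2 h3.
  have -> : rk s.+1 v = s.+1 by apply/eqP; rewrite eqn_leq h2 hb.
  by rewrite subSn // subnn expn1 muln1 /= -addnA subnKC // ltnW.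
have -> : rk s.+1 v = s.+2 by apply/eqP; rewrite eqn_leq h3 h2.
by rewrite subnn expn0 /= muln0 addn0 addnC.
Qed.


Lemma sum_const_rV (F : finFieldType) N c :
  (\sum_(v : 'rV[F]_N.+1) c = #|F| ^ N.+1 * c)%N.
Proof. by rewrite sum_nat_const card_mx mul1n. Qed.

Lemma sumK (F : finFieldType) N s : (s <= N)%N ->
  (\sum_(v : 'rV[F]_N.+1) Kc s v + #|F| ^ s = #|F| ^ N.+1 + #|F| ^ s.+1 * #|F| ^ s)%N.
Proof.
move=> sN.
have -> : (\sum_(v : 'rV[F]_N.+1) Kc s v =
    \sum_(u : 'rV[F]_s.+1) #|[set v : 'rV[F]_N.+1 | u *m Hs s v == 0%R]|)%N.
  rewrite /Kc; under eq_bigr do rewrite -sum1dep_card big_mkcond.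
  rewrite exchange_big; apply: eq_bigr => u _.
  by rewrite -sum1dep_card [RHS]big_mkcond.
rewrite (bigD1 0) //=.
rewrite (@eq_card _ _ [set: 'rV[F]_N.+1]) => [|v]; last by rewrite !inE mul0mx eqxx.
rewrite cardsT card_mx mul1n.
rewrite (eq_bigr (fun _ => #|F| ^ s)%N) => [|u unz]; last by rewrite card_solv.
rewrite sum_nat_const cardC1 card_mx mul1n.
rewrite -addnA [X in (_ + X)%N]addnC -mulSn prednK // expn_gt0.
by have := q_gt1 F; case: #|F|.
Qed.

Lemma sum_ind (F : finFieldType) N (b : 'rV[F]_N.+1 -> bool) :
  (\sum_(v : 'rV[F]_N.+1) (b v : nat) = #|[set v | b v]|)%N.
Proof.
rewrite -sum1dep_card [RHS]big_mkcond; apply: eq_bigr => v _; by case: (b v).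
Qed.

Lemma countT (F : finFieldType) N r : (2 * r <= N)%N ->
  #|[set v : 'rV[F]_N.+1 | (rk r v <= r)%N]| = (#|F| ^ (2 * r))%N.
Proof.
move=> hN; have q1 := q_gt1 F.
have hT := sum_ind (fun v : 'rV[F]_N.+1 => (rk r v <= r)%N).
move: hT; set T := #|_| => hT.
case: r hN T hT => [|s] hN T hT.
  have := sumK F (leq0n N).
  under eq_bigr do rewrite ident0.
  rewrite big_split /= sum_const_rV -big_distrr /= hT muln1 expn0 muln1 expn1.
  move=> e; have e2 : ((#|F| - 1) * T = (#|F| - 1) * 1)%N.
    move/eqP: e; rewrite -addnA eqn_add2l => e; rewrite muln1; apply/eqP.
    by rewrite -(eqn_add2r 1) subnK ?e // ltnW.
  by apply/eqP; rewrite -(eqn_pmul2l (_ : 0 < #|F| - 1)%N) ?e2 // subn_gt0.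
have sN : (s <= N)%N by lia.
have sN1 : (s.+1 <= N)%N by lia.
have e0 := sumK F sN.
have e1 := sumK F sN1.
have e3 : (\sum_(v : 'rV[F]_N.+1) (Kc s.+1 v + #|F|) =
     \sum_(v : 'rV[F]_N.+1) (#|F| * Kc s v + 1 + (#|F| - 1) * (rk s.+1 v <= s.+1)))%N.
  by apply: eq_bigr => v _; apply: identS; lia.
rewrite !big_split /= !sum_const_rV -!big_distrr /= hT muln1 in e3.
move: e0 e1 e3.
have -> : (2 * s.+1 = s.+1 + s.+1)%N by lia.
rewrite expnD !expnS.
move: (\sum_v Kc s v)%N (\sum_v Kc s.+1 v)%N (#|F| ^ N.+1)%N (#|F| ^ s)%N => S0 S1 P a.
clear hT; move: #|F| q1 T => q q1 T e0 e1 e3.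
have e4 : ((q - 1) * T = (q - 1) * (q * a * (q * a)))%N.
  have e0' := congr1 (muln q) e0; rewrite !mulnDr in e0'.
  nia.
by apply/eqP; rewrite -(eqn_pmul2l (_ : 0 < q - 1)%N) ?e4 // subn_gt0.
Qed.


Lemma chain (F : fieldType) (X : nat -> F) r d n : (r <= n)%N ->
  (\rank (hk X (r + d) n) <= r)%N = (\rank (hk X r (d + n)) <= r)%N.
Proof.
elim: d n => [|d IH] n rn; first by rewrite addn0 add0n.
rewrite addnS (addSn d n) -(addnS d n) -IH; last exact: leqW.
apply/idP/idP => h.
  by apply: SLdown => //; apply: leq_addr.
by apply: SLup => //; apply: leq_addr.
Qed.

Lemma chain' (F : fieldType) (X : nat -> F) r m n : (r <= m)%N -> (r <= n)%N ->
  (\rank (hk X m n) <= r)%N = (\rank (hk X r (m + n - r)) <= r)%N.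
Proof.
move=> rm rn; have := chain X (m - r) rn.
by rewrite subnKC // addnBAC.
Qed.

Theorem theorem1 (F : finFieldType) (r m n : nat) (hrm : (r <= m)%N) (hrn : (r <= n)%N) :
  #|[set x : {ffun 'I_(m + n).+1 -> F} | (\rank (hankel x) <= r)%N]| = (#|F| ^ (2 * r))%N.
Proof.
pose g := fun v : 'rV[F]_(m + n).+1 => ([ffun i => v 0 i] : {ffun 'I_(m + n).+1 -> F}).
have ginj : injective g.
  by move=> v1 v2 e; apply/rowP => j; have := congr1 (fun x : {ffun 'I_(m + n).+1 -> F} => x j) e; rewrite !ffunE.
have hg : forall v, hankel (g v) = hk (Xv v) m n.
  by move=> v; apply/matrixP => i j; rewrite !mxE ffunE.
have -> : [set x : {ffun 'I_(m + n).+1 -> F} | (\rank (hankel x) <= r)%N] =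
    g @: [set v : 'rV[F]_(m + n).+1 | (rk r v <= r)%N].
  apply/setP => x; apply/idP/imsetP.
    rewrite inE => hx.
    have gx : g (\row_i x i) = x by apply/ffunP => i; rewrite !ffunE mxE.
    exists (\row_i x i) => //.
    by rewrite inE /rk /Hs -chain' // -hg gx.
  move=> [v]; rewrite inE => hv ->; rewrite inE hg chain' //.
rewrite card_imset //; apply: countT; lia.
Qed.
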